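(* Let $p(x)$ be a prior density and $p(y\mid x)$ a likelihood on $\mathbb{R}^N$ for fixed data $y$, with posterior $p(x\mid y)\propto p(x)p(y\mid x)$. Let $1\le T_r<T_{r+1}$ be temperatures and define tempered densities either by posterior tempering, $\pi_t(x)\propto p(x)^{1/T_t}p(y\mid x)^{1/T_t}$ (with $T_{r+1}<\infty$), or by likelihood tempering, $\pi_t(x)\propto p(x)\,p(y\mid x)^{1/T_t}$ ($t\in\{r,r+1\}$), assumed normalizable. Let $X_r\sim\pi_r$ and $X_{r+1}\sim\pi_{r+1}$ be independent, and define the mean swap probability $$\mathrm P[\mathrm{Swap}_{(r,r+1)}]:=\mathbb E\left[\min\left\{1,\frac{\pi_r(X_{r+1})\pi_{r+1}(X_r)}{\pi_r(X_r)\pi_{r+1}(X_{r+1})}\right\}\right].$$ Then $$\mathrm P[\mathrm{Swap}_{(r,r+1)}]=\begin{cases}2\,\mathrm P[p(X_r\mid y)<p(X_{r+1}\mid y)],&\text{posterior tempering},\\ 2\,\mathrm P[p(y\mid X_r)<p(y\mid X_{r+1})],&\text{likelihood tempering}.\end{cases}$$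
   Formalization: Ties have probability zero: $\mathrm P[p(X_r\mid y)=p(X_{r+1}\mid y)]=0$ under posterior tempering and $\mathrm P[p(y\mid X_r)=p(y\mid X_{r+1})]=0$ under likelihood tempering. The statement above fails without it. *)

(* Defs.v *)
From HB Require Import structures.
From mathcomp Require Import all_boot all_order all_algebra.
From mathcomp Require Import all_classical all_reals all_analysis.

Set Implicit Arguments.
Unset Strict Implicit.
Unset Printing Implicit Defensive.

Import Order.TTheory GRing.Theory Num.Theory.
Local Open Scope ring_scope.
Local Open Scope ereal_scope.

Inductive tempering := PosteriorTempering | LikelihoodTempering.

Section Tempering.
Context {d : measure_display} {T : measurableType d} {R : realType}.

Definition invtemp (t : \bar R) : R :=
  match t with EFin r => r^-1 | _ => 0%R end.

(* unnormalized tempered density at inverse temperature b: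
   posterior tempering : p(x)^b p(y|x)^b
   likelihood tempering: p(x) p(y|x)^b   (with 0^0 = 1) *)
Definition tempered_unnorm (m : tempering) (prior lik : T -> R) (b : R)
  (x : T) : R :=
  match m with
  | PosteriorTempering => (powR (prior x) b * powR (lik x) b)%R
  | LikelihoodTempering => (prior x * powR (lik x) b)%R
  end.

Definition normconst (mu : {measure set T -> \bar R}) (f : T -> R) : \bar R :=
  \int[mu]_x (f x)%:E.

Definition normalize (mu : {measure set T -> \bar R}) (f : T -> R) (x : T)
  : R := (f x / fine (normconst mu f))%R.

Definition posterior (mu : {measure set T -> \bar R}) (prior lik : T -> R)
  : T -> R := normalize mu (fun x => prior x * lik x)%R.

Definition compared (mu : {measure set T -> \bar R}) (m : tempering)
  (prior lik : T -> R) : T -> R :=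
  match m with
  | PosteriorTempering => posterior mu prior lik
  | LikelihoodTempering => lik
  end.

End Tempering.

(* Main.v *)
Require Import Defs.
From HB Require Import structures.
From mathcomp Require Import all_boot all_order all_algebra.
From mathcomp Require Import all_classical all_reals all_analysis.
From mathcomp Require Import measurable_realfun lebesgue_integral_theory.lebesgue_integral_fubini.
From mathcomp Require Import ring.
Import Order.TTheory GRing.Theory Num.Theory.
Local Open Scope ring_scope.
Local Open Scope classical_set_scope.

Lemma key (R : realType) (s1 s2 br b1 : R) : 0 <= s1 < s2 -> 0 <= b1 < br ->
  powR s1 br * powR s2 b1 <= powR s2 br * powR s1 b1.
Proof.
move=> /andP[s10 s12] /andP[b10 b1r].
have br0 : 0 < br by apply: le_lt_trans b1r.
have [->|s1p] := eqVneq s1 0.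
  by rewrite powR0 ?gt_eqF // mul0r mulr_ge0 // powR_ge0.
have s1g : 0 < s1 by rewrite lt_neqAle eq_sym s1p.
have s2g : 0 < s2 by apply: lt_trans s12.
have E x : 0 < x -> powR x br = powR x (br - b1) * powR x b1.
  by move=> x0; rewrite -powRD ?subrK //; apply/implyP => _; rewrite gt_eqF.
rewrite (E s1) // (E s2) //.
rewrite -!mulrA [powR s2 b1 * powR s1 b1]mulrC.
rewrite ler_wpM2r ?mulr_ge0 ?powR_ge0 //.
apply: ge0_ler_powR; rewrite ?nnegrE ?subr_ge0 ?ltW //.
Qed.

Lemma measurable_bool_R (R : realType) :
  measurable_fun [set: bool] (fun b : bool => (b%:R : R)).
Proof. by []. Qed.

Lemma min_ratio (R : realType) (a b : R) : 0 <= a -> 0 <= b ->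
  Num.min 1 (a / b) * b = Num.min b a.
Proof.
move=> a0 b0; have [->|bp] := eqVneq b 0.
  by rewrite mulr0 min_l.
have bg : 0 < b by rewrite lt_neqAle eq_sym bp.
have [ab|ab] := leP a b.
  rewrite min_r ?divfK // ?min_r //.
  by rewrite ler_pdivrMr // mul1r.
rewrite min_l ?mul1r ?min_l ?ltW //.
by rewrite ltr_pdivlMr // mul1r.
Qed.

Lemma swap_integral (d : measure_display) (T : measurableType d)
  (R : realType) (mu : {sigma_finite_measure set T -> \bar R})
  (G : (T * T)%type -> \bar R) : measurable_fun setT G -> (forall z, 0 <= G z)%E ->
  (\int[mu \x mu]_z G (z.2, z.1) = \int[mu \x mu]_z G z)%E.
Proof.
move=> mG G0.
have mGs : measurable_fun setT (fun z : (T * T)%type => G (z.2, z.1)).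
  apply: measurableT_comp => //; exact: measurable_fun_pair.
rewrite (fubini_tonelli1 (fun z : (T * T)%type => G (z.2, z.1))) //.
rewrite (fubini_tonelli1 G) //.
rewrite /fubini_F /=.
exact: (fubini_tonelli (fun z : (T * T)%type => G (z.2, z.1))).
Qed.

Lemma generic (d : measure_display) (T : measurableType d)
  (R : realType) (mu : {sigma_finite_measure set T -> \bar R})
  (f g L : T -> R) :
  measurable_fun setT f -> measurable_fun setT g -> measurable_fun setT L ->
  (forall x, 0 <= f x) -> (forall x, 0 <= g x) ->
  (forall x y, L x < L y -> f x * g y <= f y * g x) ->
  (\int[mu \x mu]_z
      (((L z.1 == L z.2)%:R : R) * f z.1 * g z.2)%R%:E = 0)%E ->
  (\int[mu \x mu]_z
      ((Num.min (1:R) ((f z.2 * g z.1) / (f z.1 * g z.2))%R)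
        * f z.1 * g z.2)%R%:E
   = 2%:E * \int[mu \x mu]_z
      (((L z.1 < L z.2)%R%:R : R) * f z.1 * g z.2)%R%:E)%E.
Proof.
move=> mf mg mL f0 g0 H ties.
pose J (z : (T * T)%type) : R := ((L z.1 < L z.2)%R%:R * f z.1 * g z.2).
pose E (z : (T * T)%type) : R :=
  ((L z.1 == L z.2)%:R * Num.min (f z.1 * g z.2) (f z.2 * g z.1)).
have mf1 : measurable_fun setT (fun z : (T * T)%type => f z.1).
  exact: measurableT_comp mf measurable_fst.
have mf2 : measurable_fun setT (fun z : (T * T)%type => f z.2).
  exact: measurableT_comp mf measurable_snd.
have mg1 : measurable_fun setT (fun z : (T * T)%type => g z.1).
  exact: measurableT_comp mg measurable_fst.
have mg2 : measurable_fun setT (fun z : (T * T)%type => g z.2).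
  exact: measurableT_comp mg measurable_snd.
have mL1 : measurable_fun setT (fun z : (T * T)%type => L z.1).
  exact: measurableT_comp mL measurable_fst.
have mL2 : measurable_fun setT (fun z : (T * T)%type => L z.2).
  exact: measurableT_comp mL measurable_snd.
have mlt : measurable_fun setT (fun z : (T * T)%type => ((L z.1 < L z.2)%R%:R : R)).
  exact: measurableT_comp (measurable_bool_R R) (measurable_fun_ltr mL1 mL2).
have meq : measurable_fun setT (fun z : (T * T)%type => ((L z.1 == L z.2)%:R : R)).
  exact: measurableT_comp (measurable_bool_R R) (measurable_fun_eqr mL1 mL2).
have mJ : measurable_fun setT J.
  by apply: measurable_funM => //; apply: measurable_funM.
have mJs : measurable_fun setT (fun z : (T * T)%type => J (z.2, z.1)).
  apply: measurableT_comp mJ _; exact: measurable_fun_pair.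
have mE : measurable_fun setT E.
  apply: measurable_funM => //; apply: measurable_minr.
    exact: measurable_funM.
  exact: measurable_funM.
have J0 z : 0 <= J z by rewrite /J !mulr_ge0.
have E0 z : 0 <= E z by rewrite /E !mulr_ge0 // le_min !mulr_ge0.
have pw z : Num.min 1 ((f z.2 * g z.1) / (f z.1 * g z.2)) * f z.1 * g z.2
    = J z + J (z.2, z.1) + E z.
  rewrite -mulrA min_ratio ?mulr_ge0 // /J /E /=.
  case: (ltgtP (L z.1) (L z.2)) => h /=.
  - by rewrite min_l ?H // mul1r !mul0r !addr0.
  - by rewrite min_r ?H // mul1r !mul0r addr0 add0r.
  - by rewrite mul1r !mul0r !add0r.
rewrite (eq_integral (fun z => (J z)%:E + (J (z.2, z.1))%:E + (E z)%:E)%E);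
  last by move=> z _; rewrite pw.
rewrite ge0_integralD //; first last.
- exact/measurable_EFinP.
- by move=> z _; rewrite lee_fin.
- by apply: emeasurable_funD; exact/measurable_EFinP.
- by move=> z _; rewrite lee_fin addr_ge0.
rewrite ge0_integralD //; first last.
- exact/measurable_EFinP.
- by move=> z _; rewrite lee_fin.
- exact/measurable_EFinP.
- by move=> z _; rewrite lee_fin.
have -> : (\int[mu \x mu]_z (E z)%:E = 0)%E.
  apply/eqP; rewrite eq_le integral_ge0 ?andbT; last by move=> z _; rewrite lee_fin.
  rewrite -ties; apply: ge0_le_integral => //.
  - by move=> z _; rewrite lee_fin.
  - exact/measurable_EFinP.
  - apply/measurable_EFinP; apply: measurable_funM => //; exact: measurable_funM.
  - move=> z _; rewrite lee_fin /E -mulrA ler_wpM2l //.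
    by rewrite ge_min lexx.
rewrite adde0 (@swap_integral _ _ _ mu (fun z => (J z)%:E)); first last.
- by move=> z; rewrite lee_fin.
- exact/measurable_EFinP.
by rewrite -mule2n -mule_natl.
Qed.

Lemma invtemp_lt (R : realType) (Tr : R) (Tr1 : \bar R) : 0 < Tr -> (Tr%:E < Tr1)%E ->
  0 <= invtemp Tr1 < invtemp Tr%:E.
Proof.
move=> Tr0; case: Tr1 => [r||] //=.
  rewrite lte_fin => Tr_r.
  have r0 : 0 < r by apply: lt_trans Tr_r.
  by rewrite invr_ge0 ltW //= ltf_pV2 ?posrE.
by move=> _; rewrite lexx invr_gt0.
Qed.

Theorem proposition5 (d : measure_display) (T : measurableType d)
  (R : realType) (mu : {sigma_finite_measure set T -> \bar R})
  (m : tempering) (prior lik : T -> R) (Tr : R) (Tr1 : \bar R) :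
  measurable_fun setT prior -> measurable_fun setT lik ->
  (forall x, 0 <= prior x) -> (forall x, 0 <= lik x) ->
  (0 < normconst mu (fun x => (prior x * lik x)%R) < +oo)%E ->
  1 <= Tr -> (Tr%:E < Tr1)%E ->
  (m = PosteriorTempering -> (Tr1 < +oo)%E) ->
  (0 < normconst mu (tempered_unnorm m prior lik (invtemp Tr%:E)) < +oo)%E ->
  (0 < normconst mu (tempered_unnorm m prior lik (invtemp Tr1)) < +oo)%E ->
  let pi_r := normalize mu (tempered_unnorm m prior lik (invtemp Tr%:E)) in
  let pi_r1 := normalize mu (tempered_unnorm m prior lik (invtemp Tr1)) in
  let L := compared mu m prior lik in
  (\int[mu \x mu]_z
      (((L z.1 == L z.2)%:R : R) * pi_r z.1 * pi_r1 z.2)%R%:E = 0)%E ->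
  (\int[mu \x mu]_z
      ((Num.min (1:R) ((pi_r z.2 * pi_r1 z.1) / (pi_r z.1 * pi_r1 z.2))%R)
        * pi_r z.1 * pi_r1 z.2)%R%:E
   = 2%:E * \int[mu \x mu]_z
      (((L z.1 < L z.2)%R%:R : R) * pi_r z.1 * pi_r1 z.2)%R%:E)%E.
Proof.
move=> mp ml p0 l0 Zp Tr1g Trlt _ Zr Z1 pi_r pi_r1 L ties.
set br := invtemp Tr%:E.
set b1 := invtemp Tr1.
have Tr0 : 0 < Tr by apply: lt_le_trans Tr1g.
have hb : 0 <= b1 < br.
  exact: invtemp_lt.
set cr := fine (normconst mu (tempered_unnorm m prior lik br)).
set c1 := fine (normconst mu (tempered_unnorm m prior lik b1)).
have cr0 : 0 < cr by apply: fine_gt0.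
have c10 : 0 < c1 by apply: fine_gt0.
have mtu b : measurable_fun setT (tempered_unnorm m prior lik b).
  case: m {Zr Z1 pi_r pi_r1 L ties cr c1 cr0 c10} => /=.
    apply: measurable_funM.
      exact: (measurableT_comp (measurable_powR b) mp).
    exact: (measurableT_comp (measurable_powR b) ml).
  apply: measurable_funM => //.
  exact: (measurableT_comp (measurable_powR b) ml).
have tu0 b x : 0 <= tempered_unnorm m prior lik b x.
  by case: m {Zr Z1 pi_r pi_r1 L ties cr c1 cr0 c10 mtu} => /=;
    rewrite ?mulr_ge0 ?powR_ge0.
apply: generic.
- by apply: measurable_funM => //; exact: measurable_cst.
- by apply: measurable_funM => //; exact: measurable_cst.
- rewrite /L; case: m {Zr Z1 pi_r pi_r1 L ties cr c1 cr0 c10 mtu tu0} => //=.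
  rewrite /posterior /normalize.
  apply: measurable_funM; [exact: measurable_funM | exact: measurable_cst].
- by move=> x; rewrite /pi_r /normalize divr_ge0 // ltW.
- by move=> x; rewrite /pi_r1 /normalize divr_ge0 // ltW.
move=> x y Lxy.
rewrite /pi_r /pi_r1 /normalize -/br -/b1 -/cr -/c1 !mulf_div.
apply: ler_wpM2r; first by rewrite invr_ge0 mulr_ge0 // ltW.
move: hb => /andP[b10 b1r].
move: Lxy; rewrite /L.
case: m {Zr Z1 pi_r pi_r1 L ties cr c1 cr0 c10 mtu tu0} => /= Lxy.
  rewrite -!powRM //.
  apply: key; rewrite ?b10 ?b1r ?mulr_ge0 //=.
  move: Lxy; rewrite /posterior /normalize.
  have Zp0 : 0 < fine (normconst mu (fun x => prior x * lik x)) by apply: fine_gt0.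
  by rewrite ltr_pM2r ?invr_gt0.
have K := @key R (lik x) (lik y) br b1.
have := K; rewrite l0 Lxy b10 b1r => /(_ isT isT) K'.
have -> : prior x * powR (lik x) br * (prior y * powR (lik y) b1) =
  (prior x * prior y) * (powR (lik x) br * powR (lik y) b1) by ring.
have -> : prior y * powR (lik y) br * (prior x * powR (lik x) b1) =
  (prior x * prior y) * (powR (lik y) br * powR (lik x) b1) by ring.
  by apply: ler_wpM2l; rewrite ?mulr_ge0.
exact: ties.
Qed.
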